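(* Let $G$ be a finite group of order greater than $1$ and let $q$ be the smallest prime divisor of $|G|$. If ${\rm mf}_{pp}(G)<q$, then $G$ is cyclic.
   Context: All groups are finite. For a group $G$ and a positive integer $n$ dividing $|G|$, let $F_n(G)=\{g\in G\mid g^n=1\}$. By Frobenius' theorem $|F_n(G)|=f_n\cdot n$ for a positive integer $f_n$, called the Frobenius quotient of $G$ for $n$. ${\rm exp}(G)$ denotes the exponent of $G$. A prime-power divisor of ${\rm exp}(G)$ is a positive divisor $n$ of ${\rm exp}(G)$ of the form $n=p^k$ with $p$ prime and $k\geq 0$ (so $n=1$ is included). $\mathcal{F}_{pp}(G)=\{f_n\mid n \text{ is a prime-power divisor of } {\rm exp}(G)\}$ and ${\rm mf}_{pp}(G)$ is the maximum element of $\mathcal{F}_{pp}(G)$. *)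

(* Defs.v *)
From mathcomp Require Import all_boot all_fingroup all_solvable.
Import GroupScope.

Set Implicit Arguments. Unset Strict Implicit. Unset Printing Implicit Defensive.

Definition Fn (gT : finGroupType) (G : {set gT}) (n : nat) : {set gT} :=
  [set g in G | (g ^+ n == 1)%g].

(* Frobenius quotient f_n = |F_n(G)| / n (exact division by Frobenius' theorem
   when n divides |G|). *)
Definition frob_quot (gT : finGroupType) (G : {set gT}) (n : nat) : nat :=
  #|Fn G n| %/ n.

(* n is a prime power p^k (p prime, k >= 0; so n = 1 included) *)
Definition is_prime_power (n : nat) : bool :=
  [exists p : 'I_n.+1, [exists k : 'I_n.+1, prime p && (n == p ^ k)%N]].

Definition pp_divisor (gT : finGroupType) (G : {set gT}) (n : nat) : bool :=
  (n > 0) && (n %| exponent G) && is_prime_power n.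

Definition mf_pp (gT : finGroupType) (G : {set gT}) : nat :=
  \max_(n < (exponent G).+1 | pp_divisor G n) frob_quot G n.

(* Main.v *)
Require Import Defs.
From mathcomp Require Import all_boot all_fingroup all_solvable.
From mathcomp Require Import zify.

Set Implicit Arguments. Unset Strict Implicit. Unset Printing Implicit Defensive.

Lemma pp_pow p k : prime p -> 0 < k -> is_prime_power (p ^ k).
Proof.
move=> pp k0; apply/existsP.
have p1 := prime_gt1 pp.
have hp : p < (p ^ k).+1 by rewrite ltnS -{1}(expn1 p) leq_pexp2l // prime_gt0.
have hk : k < (p ^ k).+1 by rewrite ltnS ltnW // ltn_expl.
exists (Ordinal hp); apply/existsP; exists (Ordinal hk) => /=.
by rewrite pp eqxx.
Qed.

Lemma arith N p : N != 1%N -> N %% p = 1%N -> 1 < p -> p.+1 <= N.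
Proof.
move=> a b c; move: a; rewrite (divn_eq N p) b.
case: (N %/ p) => [|m] /=; first by [].
idtac.
move=> _; nia.
Qed.

Section Main.
Local Open Scope group_scope.
Variables (gT : finGroupType) (G : {group gT}).
Hypothesis hmf : mf_pp G < pdiv #|G|.

Lemma key n : pp_divisor G n -> #|Fn G n| < pdiv #|G| * n.
Proof.
move=> ppn; have /andP[/andP[n0 ndvd] _] := ppn.
have hn : n < (exponent G).+1 by rewrite ltnS dvdn_leq ?exponent_gt0.
have le := @leq_bigmax_cond _ (fun i : 'I_(exponent G).+1 => pp_divisor G i) (fun i : 'I_(exponent G).+1 => frob_quot G i) (Ordinal hn) ppn.
 have := leq_ltn_trans le hmf.
by rewrite /frob_quot ltn_divLR.
Qed.

Lemma exp_pp (p : nat) (P : {group gT}) : p.-group P -> P \subset G -> P :!=: 1 ->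
  [/\ prime p, exists2 k, 0 < k & exponent P = (p ^ k)%N & pp_divisor G (exponent P)].
Proof.
move=> pP sPG ntP.
have [pr _ _] := pgroup_pdiv pP ntP.
have en : p.-nat (exponent P) := pnat_dvd (exponent_dvdn P) pP.
have ek : exponent P = (p ^ logn p (exponent P))%N by rewrite -p_part part_pnat_id.
have k0 : 0 < logn p (exponent P).
  case: (posnP (logn p (exponent P))) => // k0.
  have [y yP ny1] := trivgPn _ ntP.
  have : y ^+ exponent P = 1 := expg_exponent yP.
  by rewrite ek k0 expg1 => /eqP; rewrite (negbTE ny1).
split=> //; first by exists (logn p (exponent P)).
rewrite /pp_divisor exponent_gt0 exponentS //= ek pp_pow //.
Qed.


Lemma sylow_cyclic (p : nat) (P : {group gT}) : p.-Sylow(G) P -> cyclic P.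
Proof.
move=> sylP.
have [->|ntP] := eqVneq P 1%G; first exact: cyclic1.
have pP := pHall_pgroup sylP; have sPG := pHall_sub sylP.
have [pr [k k0 ek] ppd] := exp_pp pP sPG ntP.
have hF := key ppd.
have sPF : P \subset Fn G (exponent P).
  apply/subsetP=> x xP; rewrite inE (subsetP sPG) //=.
  by rewrite expg_exponent.
have hq : pdiv #|G| <= p.
  apply: pdiv_min_dvd; first exact: prime_gt1.
  have [_ pdP _] := pgroup_pdiv pP ntP.
  exact: dvdn_trans pdP (cardSg sPG).
have [x xP ex] := exponent_witness (pgroup_nil pP).
have [e eP] : exists e, #|P| = (p ^ e)%N.
  by exists (logn p #|P|); rewrite -p_part part_pnat_id.
have [eqn|neqn] := eqVneq (exponent P) #|P|.
  apply/cyclicP; exists x; apply/eqP; rewrite eq_sym eqEcard cycle_subG xP /=.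
  by rewrite -/(order x) -ex eqn.
exfalso.
have dv : (p ^ k %| p ^ e)%N by rewrite -ek -eP exponent_dvdn.
rewrite dvdn_Pexp2l ?prime_gt1 // in dv.
have ke : k < e.
  rewrite ltn_neqAle dv andbT; apply/eqP => keq; move: neqn.
  by rewrite ek eP keq eqxx.
have : #|P| <= #|Fn G (exponent P)| := subset_leq_card sPF.
rewrite leqNgt; move/negP; apply.
apply: leq_trans hF _.
rewrite eP ek.
apply: leq_trans (leq_mul hq (leqnn _)) _.
by rewrite -expnS leq_pexp2l ?prime_gt0.
Qed.

Lemma sylow_normal (p : nat) (P : {group gT}) : p.-Sylow(G) P -> P <| G.
Proof.
move=> sylP.
have [->|ntP] := eqVneq P 1%G; first exact: normal1.
have pP := pHall_pgroup sylP; have sPG := pHall_sub sylP.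
have [pr [k k0 ek] ppd] := exp_pp pP sPG ntP.
have hF := key ppd.
have hq : pdiv #|G| <= p.
  apply: pdiv_min_dvd; first exact: prime_gt1.
  have [_ pdP _] := pgroup_pdiv pP ntP.
  exact: dvdn_trans pdP (cardSg sPG).
have eP : exponent P = #|P| := exponent_cyclic (sylow_cyclic sylP).
have cardQ : forall Q : {group gT}, p.-Sylow(G) Q -> #|Q| = #|P|.
  by move=> Q sylQ; rewrite (card_Hall sylQ) (card_Hall sylP).
have [N1|N1] := eqVneq #|'Syl_p(G)| 1%N.
  have [Q sylQ nQG] := normal_sylowP _ _ (introT eqP N1).
  have [x xG ->] := Sylow_trans sylQ sylP.
  by rewrite (normalP nQG).2.
exfalso.
set N := #|'Syl_p(G)|.
have Nmod : N %% p = 1%N := card_Syl_mod G pr.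
have p1 := prime_gt1 pr.
have NP : (p.+1 <= N)%N.
  exact: arith.
pose X := [set x | (<[x]>%G \in 'Syl_p(G)) && (<[x]>%G != P)].
have XP : X :&: P = set0.
  apply/setP => x; rewrite !inE; apply/negbTE; apply/negP => /andP[/andP[sx nx] xP].
  move/negP: nx; apply; apply/eqP/val_inj => /=; apply/eqP.
  by rewrite eqEcard cycle_subG xP (cardQ _ sx) leqnn.
have XF : X :|: P \subset Fn G (exponent P).
  apply/subsetP=> x; rewrite !inE => /orP[/andP[sx _]|xP].
    have sxG : <[x]> \subset G by move: sx => /pHall_sub.
    rewrite -cycle_subG sxG /= eP -(cardQ _ sx) -/(order x) expg_order //.
  by rewrite (subsetP sPG) //= expg_exponent.
have cardX : #|X| = ((N - 1) * totient #|P|)%N.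
  rewrite -sum1_card (partition_big (fun x => <[x]>%G) (fun Q : {group gT} => (Q \in 'Syl_p(G)) && (Q != P))) /=; last first.
    by move=> x; rewrite inE.
  rewrite (eq_bigr (fun _ => totient #|P|)); last first.
    move=> Q /andP[sQ nQ].
    have sylQ : p.-Sylow(G) Q by move: sQ; rewrite inE.
    have [y eQ] := cyclicP (sylow_cyclic sylQ).
    rewrite sum1dep_card -(cardQ Q sylQ) eQ -/(order y) totient_gen.
    apply: eq_card => x; rewrite !inE /generator.
    have [exQ|ne] := eqVneq <[x]>%G Q.
      by rewrite exQ; rewrite inE in sQ; rewrite sQ nQ /= -eQ -exQ eqxx.
    rewrite !andbF; apply/esym/negbTE; apply: contra ne => /eqP e.
    by apply/eqP/val_inj => /=; rewrite eQ e.
  rewrite (eq_bigl (mem ('Syl_p(G) :\ P))) ?sum_nat_const; last first.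
    by move=> Q; rewrite !inE andbC.
  by congr (_ * _)%N; rewrite /N (cardsD1 P 'Syl_p(G)) inE sylP add1n subn1.
have hU : (#|X| + #|P| <= #|Fn G (exponent P)|)%N.
  by rewrite -(subn0 (_ + _)) -(cards0 gT) -XP -cardsU subset_leq_card.
have := leq_ltn_trans hU hF.
rewrite cardX -eP ek totient_pfactor // -(prednK k0) expnS.
move: NP hq p1; clearbody N; clear; move: (p ^ k.-1)%N (pdiv #|G|) => t q.
move=> NP qp p1 h.
have [d hd] : exists d, (N - 1 = p + d)%N by exists (N - 1 - p)%N; lia.
rewrite hd in h.
have h2 : (q * (p * t) <= p * (p * t))%N by rewrite leq_mul2r qp orbT.
have h3 : (p * (p * t) <= (p + d) * (p.-1 * t) + p * t)%N.
  case: p {NP qp p1 hd h h2} => [|r] //=.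
  nia.
lia.
Qed.
End Main.

Theorem corollary1p3 (gT : finGroupType) (G : {group gT}) :
  1 < #|G| -> mf_pp G < pdiv #|G| -> cyclic G.
Proof.
move=> _ hmf.
apply: nil_Zgroup_cyclic.
  apply/forall_inP => V /SylowP[p _ sylV]; exact: (@sylow_cyclic gT G hmf p V sylV).
have <- : (Fitting G) = G :> {set gT}.
  apply/eqP; rewrite eqEsubset Fitting_sub /=.
  rewrite -{1}(Sylow_gen G) gen_subG; apply/bigcupsP => P /SylowP[p _ sylP].
  apply: subset_trans (pcore_sub p [group of Fitting G]); rewrite p_core_Fitting.
  exact: pcore_max (pHall_pgroup sylP) (sylow_normal hmf sylP).
exact: Fitting_nil.
Qed.
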